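(* For any $u,\alpha\in\mathbb C$ with $\mathrm{Re}(u+\alpha)>0$ and any $\kappa_1,\kappa_2\in\mathbb R$, $$\int_{\mathbb R^2}e^{-\alpha(\kappa_1+\kappa_2-\lambda_1-\lambda_2)-u(\lambda_1-\lambda_2)-e^{-(\kappa_1-\lambda_1)}-e^{-(\lambda_1-\kappa_2)}-e^{-(\kappa_2-\lambda_2)}}\,d\lambda_1d\lambda_2=\int_{\mathbb R^2}e^{-\alpha(\pi_1+\pi_2-\kappa_1-\kappa_2)-u(\pi_1-\pi_2)-e^{-(\pi_1-\kappa_1)}-e^{-(\kappa_1-\pi_2)}-e^{-(\pi_2-\kappa_2)}}\,d\pi_1d\pi_2,$$ and both integrals are finite (absolutely convergent). *)

(* Defs.v *)
From HB Require Import structures.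
From mathcomp Require Import all_boot all_order all_algebra.
From mathcomp Require Import all_classical all_reals all_analysis.
From mathcomp.real_closed Require Export complex.
Set Implicit Arguments. Unset Strict Implicit. Unset Printing Implicit Defensive.
Import Order.TTheory GRing.Theory Num.Theory.
Local Open Scope ring_scope.

Definition cexp (R : realType) (z : R[i]) : R[i] :=
  ((expR (complex.Re z))%:C * ((cos (complex.Im z))%:C + 'i * (sin (complex.Im z))%:C))%C.

Definition leb2 (R : realType) :=
  ((@lebesgue_measure R) \x (@lebesgue_measure R))%E.

Definition cintegrable (R : realType) (F : R * R -> R[i]) : Prop :=
  [/\ measurable_fun setT (fun p => complex.Re (F p)),
      measurable_fun setT (fun p => complex.Im (F p)) &
      (\int[@leb2 R]_p (Num.sqrt (complex.Re (F p) ^+ 2 + complex.Im (F p) ^+ 2))%:E < +oo)%E].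

Definition cintegral (R : realType) (F : R * R -> R[i]) : R[i] :=
  ((Rintegral (@leb2 R) setT (fun p => complex.Re (F p)))%:C
   + 'i * (Rintegral (@leb2 R) setT (fun p => complex.Im (F p)))%:C)%C.

(* Main.v *)
Require Import Defs.
From HB Require Import structures.
From mathcomp Require Import all_boot all_order all_algebra.
From mathcomp Require Import all_classical all_reals all_analysis.
From mathcomp.real_closed Require Import complex.
From mathcomp Require Import measurable_realfun ring lra.
Import Order.TTheory GRing.Theory Num.Theory numFieldNormedType.Exports.
Local Open Scope ring_scope.
Local Open Scope classical_set_scope.

Section pushf.
Local Open Scope ereal_scope.
Context d d' (T1 : measurableType d) (T2 : measurableType d') (R : realType).
Variables (m : {measure set T1 -> \bar R}) (f : T1 -> T2).
Variable (mf : measurable_fun [set: T1] f).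
Definition pushf_ of measurable_fun [set: T1] f := pushforward m f.
Local Notation pushf := (pushf_ mf).
Let pushf0 : pushf set0 = 0.
Proof. by rewrite /pushf_ /pushforward preimage_set0 measure0. Qed.
Let pushf_ge0 A : 0 <= pushf A.
Proof. by apply: measure_ge0. Qed.
Let pushf_sigma_additive : semi_sigma_additive pushf.
Proof.
move=> F mF tF mUF; rewrite /pushf_ /pushforward preimage_bigcup.
apply: measure_semi_sigma_additive.
- by move=> n; rewrite -[X in measurable X]setTI; exact: mf.
- apply/trivIsetP => /= i j _ _ ij; rewrite -preimage_setI.
  by move/trivIsetP : tF => /(_ _ _ _ _ ij) ->//; rewrite preimage_set0.
- by rewrite -preimage_bigcup -[X in measurable X]setTI; exact: mf.
Qed.
HB.instance Definition _ := isMeasure.Build _ _ _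
  pushf pushf0 pushf_ge0 pushf_sigma_additive.
End pushf.
Arguments pushf_ {d d' T1 T2 R} m f _.
Notation pushf := pushf_.

Section refl.
Context {R : realType} (K : R).
Definition refl (x : R) := K - x.
Lemma measurable_refl : measurable_fun [set: R] refl.
Proof. by apply: measurable_funB. Qed.

Lemma lebesgue_refl (A : set R) : measurable A ->
  lebesgue_measure (refl @^-1` A) = lebesgue_measure A.
Proof.
move=> mA.
have := @lebesgue_measure_unique R (@pushf_ _ _ (measurableTypeR R) (measurableTypeR R) R lebesgue_measure refl measurable_refl) _ A mA.
rewrite /pushf_ /pushforward => -> //.
move=> _ [[a b] _ <-] /=.
have -> : refl @^-1` `]a, b] = `[K - b, K - a[.
  apply/seteqP; split => x /=; rewrite !in_itv /= /refl.
    by move=> /andP[h1 h2]; apply/andP; split; lra.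
  by move=> /andP[h1 h2]; apply/andP; split; lra.
rewrite !lebesgue_measure_itv /=.
rewrite !lte_fin ltrBlDl addrA ltrBrDl ltrD2r.
by case: ifP => // _; congr (_%:E); lra.
Qed.
End refl.

Notation L2 R := ((@lebesgue_measure R) \x (@lebesgue_measure R))%E.

Section phi.
Context {R : realType} (K : R).
Definition phi (p : R * R) := (K - p.2, K - p.1).
Lemma measurable_phi : measurable_fun [set: R * R] phi.
Proof.
apply: measurable_fun_pair.
  exact: measurableT_comp (measurable_refl K) measurable_snd.
exact: measurableT_comp (measurable_refl K) measurable_fst.
Qed.

Lemma leb2_phi (X : set (measurableTypeR R * measurableTypeR R)) : measurable X -> (L2 R) (phi @^-1` X) = (L2 R) X.
Proof.
move=> mX.
have := @product_measure_unique _ _ _ _ R lebesgue_measure lebesgue_measure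
  (@pushf_ _ _ (measurableTypeR R * measurableTypeR R)%type (measurableTypeR R * measurableTypeR R)%type R (L2 R) phi measurable_phi) _ X mX.
rewrite /leb2 => ->; first by [].
move=> A B mA mB; rewrite /pushf_ /pushforward /=.
rewrite (_ : phi @^-1` (A `*` B) = (refl K @^-1` B) `*` (refl K @^-1` A)); last first.
  by apply/seteqP; split => -[x y] /= [h1 h2]; split.
rewrite product_measure1E; last 2 first.
  by rewrite -[X in measurable X]setTI; exact: measurable_refl.
  by rewrite -[X in measurable X]setTI; exact: measurable_refl.
transitivity (lebesgue_measure (refl K @^-1` B) * lebesgue_measure (refl K @^-1` A))%E; first by [].
by rewrite !lebesgue_refl // muleC.
Qed.

Local Open Scope ereal_scope.
Lemma ge0_integral_phi (h : R * R -> \bar R) : measurable_fun setT h ->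
  (forall p, 0 <= h p) ->
  \int[(L2 R)]_p h (phi p) = \int[(L2 R)]_p h p.
Proof.
move=> mh h0.
have E := @ge0_integral_pushforward _ _ (measurableTypeR R * measurableTypeR R)%type (measurableTypeR R * measurableTypeR R)%type R phi measurable_phi (L2 R) setT h
  measurableT mh (fun y _ => h0 y).
rewrite preimage_setT in E.
transitivity (\int[@pushf_ _ _ (measurableTypeR R * measurableTypeR R)%type (measurableTypeR R * measurableTypeR R)%type R (L2 R) phi measurable_phi]_p h p); first exact: (esym E).
apply: eq_measure_integral => A mA _.
rewrite /pushf_ /pushforward.
exact: (leb2_phi _ mA).
Qed.

Lemma integral_phi (h : R * R -> R) : measurable_fun setT h ->
  \int[(L2 R)]_p (h (phi p))%:E = \int[(L2 R)]_p (h p)%:E.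
Proof.
move=> mh.
rewrite integralE [in RHS]integralE.
have mEh : measurable_fun setT (EFin \o h) by exact/measurable_EFinP.
congr (_ - _).
  have := @ge0_integral_phi (EFin \o h)^\+ (measurable_funepos mEh) (fun p => funepos_ge0 _ p).
  move=> HH; rewrite -HH; apply: eq_integral => p _.
  by rewrite !funeposE.
have := @ge0_integral_phi (EFin \o h)^\- (measurable_funeneg mEh) (fun p => funeneg_ge0 _ p).
move=> HH; rewrite -HH; apply: eq_integral => p _.
by rewrite !funenegE.
Qed.
End phi.
Section cx.
Context {R : realType}.
Lemma Re_cexp (z : R[i]) : complex.Re (cexp z) = expR (complex.Re z) * cos (complex.Im z).
Proof. by case: z => x y; rewrite /cexp /=; ring. Qed.
Lemma Im_cexp (z : R[i]) : complex.Im (cexp z) = expR (complex.Re z) * sin (complex.Im z).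
Proof. by case: z => x y; rewrite /cexp /=; ring. Qed.
Lemma norm_cexp (z : R[i]) :
  Num.sqrt (complex.Re (cexp z) ^+ 2 + complex.Im (cexp z) ^+ 2) = expR (complex.Re z).
Proof.
rewrite Re_cexp Im_cexp !exprMn -mulrDr addrC sin2cos2.
by rewrite subrK mulr1 sqrtr_sqr gtr0_norm // expR_gt0.
Qed.
Lemma Re_lin (a b : R[i]) (x y e : R) :
  complex.Re (- a * x%:C - b * y%:C - e%:C)%C = - (complex.Re a * x) - complex.Re b * y - e.
Proof. by case: a => ??; case: b => ??; rewrite /=; ring. Qed.
Lemma Im_lin (a b : R[i]) (x y e : R) :
  complex.Im (- a * x%:C - b * y%:C - e%:C)%C = - (complex.Im a * x) - complex.Im b * y.
Proof. by case: a => ??; case: b => ??; rewrite /=; ring. Qed.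
End cx.
Section bounds.
Context {R : realType}.
Lemma tangent (M y : R) : 0 < M -> M * (1 + y - ln M) <= expR y.
Proof.
move=> M0.
have -> : expR y = M * expR (y - ln M).
  by rewrite expRD expRN lnK ?posrE // mulrCA mulfV ?gt_eqF // mulr1.
rewrite ler_pM2l // -addrA; exact: expR_ge1Dx.
Qed.

Lemma bound2 (s k : R) : 0 < s -> exists C, forall y : R,
  s * y - expR (y - k) <= C - s * `|y|.
Proof.
move=> s0; exists `|2 * s * (k + ln (2 * s) - 1)| => y.
have E0 : 0 <= expR (y - k) by exact: expR_ge0.
have Ca := ler_norm (2 * s * (k + ln (2 * s) - 1)).
case: (leP 0 y) => y0.
  rewrite (ger0_norm y0).
  have h2s : 0 < 2 * s by lra.
  have T := @tangent (2 * s) (y - k) h2s.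
  move: T Ca; set L := ln (2 * s); set E := expR (y - k); set C := `|_|.
  have -> : 2 * s * (1 + (y - k) - L) = 2 * s + 2 * (s * y) - 2 * (s * k) - 2 * (s * L) by ring.
  have -> : 2 * s * (k + L - 1) = 2 * (s * k) + 2 * (s * L) - 2 * s by ring.
  set sy := s * y; set sk := s * k; set sL := s * L.
  lra.
rewrite (ltr0_norm y0).
have := normr_ge0 (2 * s * (k + ln (2 * s) - 1)).
have : s * y <= 0 by rewrite pmulr_rle0 // ltW.
lra.
Qed.

Lemma bound1 (d k1 k2 : R) : exists C, forall x : R,
  d * x - expR (x - k1) - expR (k2 - x) <= C - `|x|.
Proof.
pose M := `|d| + 1.
have M0 : 0 < M by rewrite /M; have := normr_ge0 d; lra.
exists (`|M * (k1 + ln M - 1)| + `|M * (ln M - 1 - k2)|) => x.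
have E1 : 0 <= expR (x - k1) by exact: expR_ge0.
have E2 : 0 <= expR (k2 - x) by exact: expR_ge0.
have C1 := ler_norm (M * (k1 + ln M - 1)).
have C2 := ler_norm (M * (ln M - 1 - k2)).
have C1' := normr_ge0 (M * (k1 + ln M - 1)).
have C2' := normr_ge0 (M * (ln M - 1 - k2)).
have Hd1 := ler_norm d.
have Hd2 : - d <= `|d| by rewrite -normrN ler_norm.
case: (leP 0 x) => x0.
  rewrite (ger0_norm x0).
  have T := @tangent M (x - k1) M0.
  have H : (d - `|d|) * x <= 0 by apply: mulr_le0_ge0 => //; lra.
  rewrite /M in T H C1 C1'. lra.
rewrite (ltr0_norm x0).
have T := @tangent M (k2 - x) M0.
have H : (d + `|d|) * x <= 0 by apply: mulr_ge0_le0; lra.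
rewrite /M in T H C2 C2'. lra.
Qed.
End bounds.
Section int1.
Context {R : realType}.
Local Open Scope ereal_scope.
Definition ex (r x : R) : R := expR (- r * `|x|).
Lemma continuous_ex r : continuous (ex r).
Proof.
move=> x; apply: continuous_comp; last exact: continuous_expR.
apply: continuousM; [exact: cst_continuous | exact: norm_continuous].
Qed.
Lemma measurable_ex r : measurable_fun setT (ex r).
Proof. exact: continuous_measurable_fun (continuous_ex r). Qed.

Lemma integral_ex_lty (r : R) : (0 < r)%R ->
  \int[@lebesgue_measure R]_x (ex r x)%:E < +oo.
Proof.
move=> r0.
rewrite ge0_symfun_integralT; last 3 first.
- by move=> x; exact: expR_ge0.
- exact: continuous_ex.
- by move=> x; rewrite /ex /= normrN.
have mD : measurable [set x : R | (0 <= x)%R] by rewrite -set_itvcy.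
apply: (@le_lt_trans _ _ (2%:E * (r^-1)%:E)); last by rewrite -EFinM ltry.
rewrite lee_pmul2l; [ | done | done].
have -> : \int[lebesgue_measure]_(x in [set x : R | (0 <= x)%R]) (ex r x)%:E =
  \int[lebesgue_measure]_(x in [set x : R | (0 <= x)%R]) (r^-1 * exponential_pdf r x)%:E.
  apply: eq_integral => x; rewrite inE /= => x0.
  rewrite (@exponential_pdfE R r x x0).
  by rewrite /ex ger0_norm // mulrA mulVf ?gt_eqF // mul1r.
apply: (@le_trans _ _ (\int[lebesgue_measure]_(x in setT) (r^-1 * exponential_pdf r x)%:E)).
  apply: ge0_subset_integral => //.
  - apply/measurable_EFinP; apply: measurable_funM => //.
    exact: measurable_exponential_pdf.
  - move=> x _; rewrite lee_fin mulr_ge0 //; first by rewrite invr_ge0 ltW.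
    by apply: exponential_pdf_ge0; exact: ltW.
rewrite (_ : (fun x => _) = (fun x => (r^-1)%:E * (exponential_pdf r x)%:E)); last first.
  by apply: funext => x; rewrite EFinM.
rewrite ge0_integralZl_EFin //; last by rewrite invr_ge0 ltW.
- by rewrite integral_exponential_pdf // mule1.
- move=> x _; rewrite lee_fin; apply: exponential_pdf_ge0; exact: ltW.
- apply/measurable_EFinP; exact: measurable_exponential_pdf.
Qed.
End int1.


Section int2.
Context {R : realType}.
Local Open Scope ereal_scope.
Definition ex2 (r : R) (p : R * R) : R := (ex r p.1 * ex r p.2)%R.
Lemma measurable_ex2 r : measurable_fun setT (ex2 r).
Proof.
apply: measurable_funM.
  exact: measurableT_comp (measurable_ex r) measurable_fst.
exact: measurableT_comp (measurable_ex r) measurable_snd.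
Qed.

Lemma integral_ex2_lty (r : R) : (0 < r)%R ->
  \int[L2 R]_p (ex2 r p)%:E < +oo.
Proof.
move=> r0.
have ex0 : forall x, (0 <= ex r x)%R by move=> x; exact: expR_ge0.
rewrite fubini_tonelli1; last 2 first.
  by apply/measurable_EFinP; exact (measurable_ex2 r).
  by move=> p; rewrite lee_fin mulr_ge0.
rewrite /fubini_F /ex2 /=.
have mex : measurable_fun setT (fun x : R => (ex r x)%:E).
  by apply/measurable_EFinP; exact (measurable_ex r).
have I0 : 0 <= \int[lebesgue_measure]_y (ex r y)%:E.
  by apply: integral_ge0 => x _; rewrite lee_fin.
have HI : forall x, \int[lebesgue_measure]_y (ex r x * ex r y)%:E =
    (ex r x)%:E * \int[lebesgue_measure]_y (ex r y)%:E.
  move=> x; under eq_integral => y _ do rewrite EFinM.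
  by rewrite ge0_integralZl_EFin // => y _; rewrite lee_fin.
under eq_integral => x _ do rewrite HI.
rewrite ge0_integralZr //; last by move=> x _; rewrite lee_fin.
apply: lte_mul_pinfty => //.
  by rewrite ge0_fin_numE ?integral_ex_lty.
exact: integral_ex_lty.
Qed.
End int2.

Section main.
Context {R : realType} (u alpha : R[i]) (k1 k2 : R).
Local Notation K := (k1 + k2).
Local Notation a := (complex.Re alpha).
Local Notation b := (complex.Re u).
Local Notation ai := (complex.Im alpha).
Local Notation bi := (complex.Im u).
Definition ReA (x : R) : R := - (a * (K - x)) - b * x - expR (- (k1 - x)) - expR (- (x - k2)).
Definition ReB (y : R) : R := a * y + b * y - expR (- (k2 - y)).
Definition ImA (x : R) : R := - (ai * (K - x)) - bi * x.
Definition ImB (y : R) : R := ai * y + bi * y.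

Lemma measurable_ReA : measurable_fun setT ReA.
Proof.
apply: measurable_funB; last first.
  by apply: measurableT_comp; [exact: measurable_expR|]; apply: measurableT_comp; [exact: oppr_measurable|]; exact: measurable_funB.
apply: measurable_funB; last first.
  by apply: measurableT_comp; [exact: measurable_expR|]; apply: measurableT_comp; [exact: oppr_measurable|]; exact: measurable_funB.
apply: measurable_funB; last exact: measurable_funM.
apply: measurableT_comp; [exact: oppr_measurable|].
apply: measurable_funM => //; exact: measurable_funB.
Qed.
Lemma measurable_ReB : measurable_fun setT ReB.
Proof.
apply: measurable_funB; last first.
  by apply: measurableT_comp; [exact: measurable_expR|]; apply: measurableT_comp; [exact: oppr_measurable|]; exact: measurable_funB.
by apply: measurable_funD; exact: measurable_funM.
Qed.
Lemma measurable_ImA : measurable_fun setT ImA.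
Proof.
apply: measurable_funB; last exact: measurable_funM.
apply: measurableT_comp; [exact: oppr_measurable|].
apply: measurable_funM => //; exact: measurable_funB.
Qed.
Lemma measurable_ImB : measurable_fun setT ImB.
Proof. by apply: measurable_funD; exact: measurable_funM. Qed.

Lemma measurable_sep (A B : R -> R) : measurable_fun setT A -> measurable_fun setT B ->
  measurable_fun setT (fun p : R * R => A p.1 + B p.2).
Proof.
move=> mA mB; apply: measurable_funD.
  exact: measurableT_comp mA measurable_fst.
exact: measurableT_comp mB measurable_snd.
Qed.

Lemma ReZ_sep (p : R * R) : - (a * (k1 + k2 - p.1 - p.2)) - b * (p.1 - p.2) -
  (expR (- (k1 - p.1)) + expR (- (p.1 - k2)) + expR (- (k2 - p.2))) = ReA p.1 + ReB p.2.
Proof. by rewrite /ReA /ReB; ring. Qed.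
Lemma ImZ_sep (p : R * R) : - (ai * (k1 + k2 - p.1 - p.2)) - bi * (p.1 - p.2) = ImA p.1 + ImB p.2.
Proof. by rewrite /ImA /ImB; ring. Qed.

Lemma boundF : 0 < a + b -> exists C r, 0 < r /\ forall p : R * R,
  expR (ReA p.1 + ReB p.2) <= expR C * ex2 r p.
Proof.
move=> s0.
have [C1 H1] := bound1 (a - b) k1 k2.
have [C2 H2] := @bound2 R (a + b) k2 s0.
pose r := Num.min 1 (a + b).
have r0 : 0 < r by rewrite /r lt_min s0 ltr01.
have r1 : r <= 1 by rewrite /r ge_min lexx.
have rs : r <= a + b by rewrite /r ge_min lexx orbT.
exists (C1 + C2 - a * K), r; split => // -[x y] /=.
rewrite /ex2 /ex /= -!expRD ler_expR.
have := H1 x; have := H2 y.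
rewrite /ReA /ReB !opprB.
have hx : r * `|x| <= `|x| by rewrite -[leRHS]mul1r ler_wpM2r.
have hy : r * `|y| <= (a + b) * `|y| by rewrite ler_wpM2r.
move: hx hy.
set ex1 := expR (x - k1); set ex2' := expR (k2 - x); set ex3 := expR (y - k2).
move=> hx hy h2 h1.
have -> : - (a * (k1 + k2 - x)) - b * x - ex1 - ex2' + (a * y + b * y - ex3) =
  (a - b) * x - ex1 - ex2' + ((a + b) * y - ex3) - a * (k1 + k2) by ring.
have -> : C1 + C2 - a * (k1 + k2) + (- r * `|x| + - r * `|y|) =
  C1 + C2 - a * (k1 + k2) - r * `|x| - r * `|y| by ring.
lra.
Qed.
End main.

Local Close Scope classical_set_scope.
Local Open Scope complex_scope.

Theorem lemma3p6 (R : realType) (u alpha : R[i]) (k1 k2 : R)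
  (hpos : 0 < complex.Re (u + alpha)) :
  let F := fun p : R * R =>
    cexp (- alpha * (k1 + k2 - p.1 - p.2)%:C - u * (p.1 - p.2)%:C
          - (expR (- (k1 - p.1)) + expR (- (p.1 - k2)) + expR (- (k2 - p.2)))%:C) in
  let G := fun p : R * R =>
    cexp (- alpha * (p.1 + p.2 - k1 - k2)%:C - u * (p.1 - p.2)%:C
          - (expR (- (p.1 - k1)) + expR (- (k1 - p.2)) + expR (- (p.2 - k2)))%:C) in
  [/\ cintegrable F, cintegrable G & cintegral F = cintegral G].
Proof.
move=> F G.
have HG : forall p, G p = F (phi (k1 + k2) p).
  move=> [x y]; rewrite /F /G /phi /=.
  have e1 : k1 + k2 - (k1 + k2 - y) - (k1 + k2 - x) = x + y - k1 - k2 by ring.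
  have e2 : (k1 + k2 - y) - (k1 + k2 - x) = x - y by ring.
  have e3 : - (k1 - (k1 + k2 - y)) = - (y - k2) by ring.
  have e4 : - ((k1 + k2 - y) - k2) = - (k1 - y) by ring.
  have e5 : - (k2 - (k1 + k2 - x)) = - (x - k1) by ring.
  rewrite e1 e2 e3 e4 e5.
  congr (cexp (_ - _%:C)); ring.
pose RA := ReA u alpha k1 k2; pose RB := ReB u alpha k2.
pose IA := ImA u alpha k1 k2; pose IB := ImB u alpha.
have ReF : forall p, complex.Re (F p) = (expR (RA p.1 + RB p.2) * cos (IA p.1 + IB p.2))%R.
  by move=> p; rewrite /F Re_cexp Re_lin Im_lin ReZ_sep ImZ_sep.
have ImF : forall p, complex.Im (F p) = (expR (RA p.1 + RB p.2) * sin (IA p.1 + IB p.2))%R.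
  by move=> p; rewrite /F Im_cexp Re_lin Im_lin ReZ_sep ImZ_sep.
have NF : forall p, Num.sqrt (complex.Re (F p) ^+ 2 + complex.Im (F p) ^+ 2) =
    expR (RA p.1 + RB p.2).
  by move=> p; rewrite /F norm_cexp Re_lin ReZ_sep.
have mRe : measurable_fun setT (fun p : R * R => RA p.1 + RB p.2).
  exact: measurable_sep (measurable_ReA _ _ _ _) (measurable_ReB _ _ _).
have mIm : measurable_fun setT (fun p : R * R => IA p.1 + IB p.2).
  exact: measurable_sep (measurable_ImA _ _ _ _) (measurable_ImB _ _).
have mE : measurable_fun setT (fun p : R * R => expR (RA p.1 + RB p.2)).
  exact: measurableT_comp (@measurable_expR R) mRe.
have mReF : measurable_fun setT (fun p => complex.Re (F p)).
  rewrite (_ : (fun p => _) = (fun p => (expR (RA p.1 + RB p.2) * cos (IA p.1 + IB p.2))%R)); last first.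
    by apply: funext => p; rewrite ReF.
  apply: measurable_funM => //.
  exact: measurableT_comp (continuous_measurable_fun (@continuous_cos R)) mIm.
have mImF : measurable_fun setT (fun p => complex.Im (F p)).
  rewrite (_ : (fun p => _) = (fun p => (expR (RA p.1 + RB p.2) * sin (IA p.1 + IB p.2))%R)); last first.
    by apply: funext => p; rewrite ImF.
  apply: measurable_funM => //.
  exact: measurableT_comp (continuous_measurable_fun (@continuous_sin R)) mIm.
have finF : (\int[L2 R]_p (expR (RA p.1 + RB p.2))%:E < +oo)%E.
  have hab : 0 < complex.Re alpha + complex.Re u by move: hpos; rewrite raddfD /= addrC.
  have [C [r [r0 Hb]]] := @boundF R u alpha k1 k2 hab.
  apply: (@le_lt_trans _ _ (\int[L2 R]_p ((expR C)%:E * (ex2 r p)%:E))%E).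
    apply: ge0_le_integral => //.
    - by apply/measurable_EFinP; exact mE.
    - by apply: measurable_funeM; apply/measurable_EFinP; exact (measurable_ex2 r).
    - by move=> p _; rewrite -EFinM lee_fin; exact: Hb.
  rewrite ge0_integralZl_EFin //.
  - by apply: lte_mul_pinfty => //; exact: integral_ex2_lty.
  - by move=> p _; rewrite lee_fin /ex2 mulr_ge0 // expR_ge0.
  - by apply/measurable_EFinP; exact (measurable_ex2 r).
have mReG : measurable_fun setT (fun p => complex.Re (G p)).
  rewrite (_ : (fun p => _) = (fun p => complex.Re (F p)) \o phi (k1 + k2)); last first.
    by apply: funext => p; rewrite HG.
  exact: measurableT_comp mReF (measurable_phi _).
have mImG : measurable_fun setT (fun p => complex.Im (G p)).
  rewrite (_ : (fun p => _) = (fun p => complex.Im (F p)) \o phi (k1 + k2)); last first.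
    by apply: funext => p; rewrite HG.
  exact: measurableT_comp mImF (measurable_phi _).
split.
- split => //; rewrite /leb2.
  by under eq_integral => p _ do rewrite NF.
- split => //; rewrite /leb2.
  under eq_integral => p _ do rewrite HG NF.
  have mE' : measurable_fun setT (fun p : R * R => (expR (RA p.1 + RB p.2))%:E).
    by apply/measurable_EFinP; exact mE.
  have E := @ge0_integral_phi R (k1 + k2) (fun p => (expR (RA p.1 + RB p.2))%:E)
    mE' (fun p => expR_ge0 _).
  exact (eq_ind_r (fun z => (z < +oo)%E) finF E).
- have eqRe : (\int[L2 R]_x (complex.Re (G x))%:E = \int[L2 R]_x (complex.Re (F x))%:E)%E.
    under eq_integral => p _ do rewrite HG.
    exact (integral_phi (k1 + k2) _ mReF).
  have eqIm : (\int[L2 R]_x (complex.Im (G x))%:E = \int[L2 R]_x (complex.Im (F x))%:E)%E.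
    under eq_integral => p _ do rewrite HG.
    exact (integral_phi (k1 + k2) _ mImF).
  by rewrite /cintegral /Rintegral /leb2 eqRe eqIm.
Qed.
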